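(* Let $\mathbf{V}$ be a variety of Heyting algebras and $L\in\mathbf{V}$ finitely presented. If $\langle u,M\rangle$ is a unifier of $L$ in $\mathbf{V}$, then $\langle\mathcal{B}(u),\mathcal{B}(M)\rangle$ is a unifier of $\mathcal{B}(L)$ in $\rho^*(\mathbf{V})$.
   Context: Interior algebra: Boolean algebra with operator $g$ satisfying $g(1)=1$, $g(xy)=g(x)g(y)$, $g(x)\le x$, $gg(x)=g(x)$. For a Heyting algebra $L$, $\mathcal{B}(L)=\langle\mathrm{Fr}(L),g_L\rangle$ with $\mathrm{Fr}(L)$ the free Boolean extension of $L$ and $g_L((-u_1+v_1)\cdots(-u_n+v_n))=(u_1\Rightarrow v_1)\cdots(u_n\Rightarrow v_n)$; for a Heyting homomorphism $h\colon L\to M$, $\mathcal{B}(h)$ is the unique interior algebra homomorphism $\mathcal{B}(L)\to\mathcal{B}(M)$ extending $h$. $\rho^*(\mathbf{V})$ is the variety generated by $\{\mathcal{B}(L):L\in\mathbf{V}\}$. A unifier of a finitely presented $A$ in a variety $\mathbf{W}$ is a pair $\langle u,B\rangle$ with $B$ finitely presented and projective in $\mathbf{W}$ and $u\colon A\to B$ a homomorphism. *)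

(* Defs.v *)
From Stdlib Require List.
From mathcomp Require Import all_boot.

Set Implicit Arguments.
Unset Strict Implicit.
Unset Printing Implicit Defensive.

Record signature := Signature { op : Type; arity : op -> nat }.

Record algebra (S : signature) := Algebra {
  car :> Type;
  interp : forall o : op S, ('I_(@arity S o) -> car) -> car }.

Arguments interp {S} _ o _.

Inductive term (S : signature) : Type :=
  | Var : nat -> term S
  | App : forall o : op S, ('I_(@arity S o) -> term S) -> term S.

Arguments Var {S} _.
Arguments App {S} o _.

Fixpoint eval (S : signature) (A : algebra S) (v : nat -> A) (t : term S) : A :=
  match t with
  | Var k => v k
  | App o f => interp A o (fun i => eval v (f i))
  end.

Fixpoint vars_lt (S : signature) (n : nat) (t : term S) : Prop :=
  match t with
  | Var k => k < n
  | App o f => forall i, vars_lt n (f i)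
  end.

Definition satisfies (S : signature) (A : algebra S) (e : term S * term S) : Prop :=
  forall v : nat -> A, eval v e.1 = eval v e.2.

Definition is_hom (S : signature) (A B : algebra S) (f : A -> B) : Prop :=
  forall (o : op S) (args : 'I_(@arity S o) -> A),
    f (interp A o args) = interp B o (fun i => f (args i)).

Definition aclass (S : signature) := algebra S -> Prop.

Definition fin_presented (S : signature) (W : aclass S) (A : algebra S) : Prop :=
  W A /\
  exists (n : nat) (a : nat -> A) (R : seq (term S * term S)),
    (forall p, List.In p R -> vars_lt n p.1 /\ vars_lt n p.2) /\
    (forall p, List.In p R -> eval a p.1 = eval a p.2) /\
    (forall B : algebra S, W B ->
       forall b : nat -> B,
         (forall p, List.In p R -> eval b p.1 = eval b p.2) ->
         exists h : A -> B,
           is_hom h /\ (forall i, i < n -> h (a i) = b i) /\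
           (forall h' : A -> B, is_hom h' -> (forall i, i < n -> h' (a i) = b i) ->
              forall x, h' x = h x)).

Definition projective (S : signature) (W : aclass S) (P : algebra S) : Prop :=
  W P /\
  forall (C D : algebra S), W C -> W D ->
    forall (f : C -> D) (g : P -> D),
      is_hom f -> (forall y : D, exists x : C, f x = y) -> is_hom g ->
      exists h : P -> C, is_hom h /\ (forall x, f (h x) = g x).

Definition unifier (S : signature) (W : aclass S) (A B : algebra S) (u : A -> B) : Prop :=
  fin_presented W A /\ fin_presented W B /\ projective W B /\ is_hom u.

Definition args0 (T : Type) : 'I_0 -> T :=
  fun i => False_rect T (Bool.diff_false_true (ltn_ord i)).
Definition args1 (T : Type) (x : T) : 'I_1 -> T := fun _ => x.
Definition args2 (T : Type) (x y : T) : 'I_2 -> T :=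
  fun i => if nat_of_ord i == 0 then x else y.

Inductive hop := HMeet | HJoin | HImp | HBot | HTop.
Definition harity (o : hop) : nat :=
  match o with HMeet | HJoin | HImp => 2 | HBot | HTop => 0 end.
Definition hsig : signature := Signature harity.

Section HeytingOps.
Variable A : algebra hsig.
Definition hmeet (x y : A) : A := interp A HMeet (args2 x y).
Definition hjoin (x y : A) : A := interp A HJoin (args2 x y).
Definition himp (x y : A) : A := interp A HImp (args2 x y).
Definition hbot : A := interp A HBot (@args0 A).
Definition htop : A := interp A HTop (@args0 A).
Definition hle (x y : A) : Prop := hmeet x y = x.

Definition is_HA : Prop :=
  (forall x y, hmeet x y = hmeet y x) /\
  (forall x y z, hmeet x (hmeet y z) = hmeet (hmeet x y) z) /\
  (forall x y, hjoin x y = hjoin y x) /\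
  (forall x y z, hjoin x (hjoin y z) = hjoin (hjoin x y) z) /\
  (forall x y, hmeet x (hjoin x y) = x) /\
  (forall x y, hjoin x (hmeet x y) = x) /\
  (forall x, hmeet x htop = x) /\
  (forall x, hjoin x hbot = x) /\
  (forall a x y, hle (hmeet a x) y <-> hle a (himp x y)).
End HeytingOps.

Definition HA_variety (E : term hsig * term hsig -> Prop) : aclass hsig :=
  fun A => is_HA A /\ forall e, E e -> satisfies A e.

Inductive iop := IMeet | IJoin | ICompl | IBot | ITop | IInt.
Definition iarity (o : iop) : nat :=
  match o with IMeet | IJoin => 2 | ICompl | IInt => 1 | IBot | ITop => 0 end.
Definition isig : signature := Signature iarity.

Section InteriorOps.
Variable A : algebra isig.
Definition imeet (x y : A) : A := interp A IMeet (args2 x y).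
Definition ijoin (x y : A) : A := interp A IJoin (args2 x y).
Definition icompl (x : A) : A := interp A ICompl (args1 x).
Definition ibot : A := interp A IBot (@args0 A).
Definition itop : A := interp A ITop (@args0 A).
Definition iint (x : A) : A := interp A IInt (args1 x).
Definition ile (x y : A) : Prop := imeet x y = x.

Definition is_IA : Prop :=
  (forall x y, imeet x y = imeet y x) /\
  (forall x y z, imeet x (imeet y z) = imeet (imeet x y) z) /\
  (forall x y, ijoin x y = ijoin y x) /\
  (forall x y z, ijoin x (ijoin y z) = ijoin (ijoin x y) z) /\
  (forall x y, imeet x (ijoin x y) = x) /\
  (forall x y, ijoin x (imeet x y) = x) /\
  (forall x y z, imeet x (ijoin y z) = ijoin (imeet x y) (imeet x z)) /\
  (forall x, imeet x itop = x) /\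
  (forall x, ijoin x ibot = x) /\
  (forall x, imeet x (icompl x) = ibot) /\
  (forall x, ijoin x (icompl x) = itop) /\
  iint itop = itop /\
  (forall x y, iint (imeet x y) = imeet (iint x) (iint y)) /\
  (forall x, ile (iint x) x) /\
  (forall x, iint (iint x) = iint x).

Definition ibigmeet (s : seq A) : A := foldr imeet itop s.
End InteriorOps.

Inductive bgen (L : Type) (B : algebra isig) (e : L -> B) : B -> Prop :=
  | bgen_img : forall a, bgen e (e a)
  | bgen_bot : bgen e (ibot B)
  | bgen_top : bgen e (itop B)
  | bgen_meet : forall x y, bgen e x -> bgen e y -> bgen e (imeet x y)
  | bgen_join : forall x y, bgen e x -> bgen e y -> bgen e (ijoin x y)
  | bgen_compl : forall x, bgen e x -> bgen e (icompl x).

Definition hbigmeet (L : algebra hsig) (s : seq L) : L := foldr (@hmeet L) (htop L) s.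

(* (B, e) realizes B(L) = <Fr(L), g_L>: B is an interior algebra whose
   Boolean reduct is the free Boolean extension of the Heyting algebra L
   along the bounded-lattice embedding e (e injective, e(L) generates B),
   and g_L((-u_1+v_1)...(-u_n+v_n)) = (u_1=>v_1)...(u_n=>v_n). *)
Definition is_B_of (L : algebra hsig) (B : algebra isig) (e : L -> B) : Prop :=
  is_HA L /\ is_IA B /\
  injective e /\
  (forall x y, e (hmeet x y) = imeet (e x) (e y)) /\
  (forall x y, e (hjoin x y) = ijoin (e x) (e y)) /\
  e (hbot L) = ibot B /\ e (htop L) = itop B /\
  (forall x : B, bgen e x) /\
  (forall s : seq (L * L),
     iint (ibigmeet [seq ijoin (icompl (e p.1)) (e p.2) | p <- s])
     = e (hbigmeet [seq himp p.1 p.2 | p <- s])).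

Definition is_B_hom (L M : algebra hsig) (BL BM : algebra isig)
    (eL : L -> BL) (eM : M -> BM) (h : L -> M) (Bh : BL -> BM) : Prop :=
  is_hom Bh /\ forall x, Bh (eL x) = eM (h x).

(* rho^*(V): the variety of interior algebras generated by
   { B(L) : L in V }, i.e. the interior algebras satisfying every identity
   valid in all B(L), L in V. *)
Definition rho_star (V : aclass hsig) : aclass isig :=
  fun A => is_IA A /\
    forall e : term isig * term isig,
      (forall (L : algebra hsig) (B : algebra isig) (eL : L -> B),
          V L -> is_B_of eL -> satisfies B e) ->
      satisfies A e.

(* Main.v *)
Require Import Defs.
From mathcomp Require Import all_boot zify.
From Stdlib Require Import FunctionalExtensionality ProofIrrelevance ClassicalEpsilon.
Set Implicit Arguments.
Unset Strict Implicit.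
Unset Printing Implicit Defensive.

Section BoolAlg.
Variable A : algebra isig.
Hypothesis HA : is_IA A.
Local Notation "x ⊓ y" := (imeet x y) (at level 40, left associativity).
Local Notation "x ⊔ y" := (ijoin x y) (at level 50, left associativity).
Local Notation "- x" := (icompl x).
Local Notation "⊥" := (ibot A).
Local Notation "⊤" := (itop A).
Local Notation "x ≤ y" := (ile x y) (at level 70).

Lemma mC (x y : A) : x ⊓ y = y ⊓ x. Proof. by case: HA. Qed.
Lemma mA (x y z : A) : x ⊓ (y ⊓ z) = x ⊓ y ⊓ z. Proof. by case: HA => _ []. Qed.
Lemma jC (x y : A) : x ⊔ y = y ⊔ x. Proof. by case: HA => _ [_ []]. Qed.
Lemma jA (x y z : A) : x ⊔ (y ⊔ z) = x ⊔ y ⊔ z. Proof. by case: HA => _ [_ [_ []]]. Qed.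
Lemma ab1 (x y : A) : x ⊓ (x ⊔ y) = x. Proof. by case: HA => _ [_ [_ [_ []]]]. Qed.
Lemma ab2 (x y : A) : x ⊔ (x ⊓ y) = x. Proof. by case: HA => _ [_ [_ [_ [_ []]]]]. Qed.
Lemma dis (x y z : A) : x ⊓ (y ⊔ z) = x ⊓ y ⊔ x ⊓ z.
Proof. by case: HA => _ [_ [_ [_ [_ [_ []]]]]]. Qed.
Lemma m1 (x : A) : x ⊓ ⊤ = x. Proof. by case: HA => _ [_ [_ [_ [_ [_ [_ []]]]]]]. Qed.
Lemma j0 (x : A) : x ⊔ ⊥ = x. Proof. by case: HA => _ [_ [_ [_ [_ [_ [_ [_ []]]]]]]]. Qed.
Lemma mcomp (x : A) : x ⊓ - x = ⊥. Proof. by case: HA => _ [_ [_ [_ [_ [_ [_ [_ [_ []]]]]]]]]. Qed.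
Lemma jcomp (x : A) : x ⊔ - x = ⊤. Proof. by case: HA => _ [_ [_ [_ [_ [_ [_ [_ [_ [_ []]]]]]]]]]. Qed.
Lemma g1 : iint (itop A) = itop A. Proof. by case: HA => _ [_ [_ [_ [_ [_ [_ [_ [_ [_ [_ []]]]]]]]]]]. Qed.
Lemma gm (x y : A) : iint (x ⊓ y) = iint x ⊓ iint y.
Proof. by case: HA => _ [_ [_ [_ [_ [_ [_ [_ [_ [_ [_ [_ []]]]]]]]]]]]. Qed.
Lemma gle (x : A) : iint x ≤ x.
Proof. by case: HA => _ [_ [_ [_ [_ [_ [_ [_ [_ [_ [_ [_ [_ []]]]]]]]]]]]]. Qed.
Lemma gg (x : A) : iint (iint x) = iint x.
Proof. by case: HA => _ [_ [_ [_ [_ [_ [_ [_ [_ [_ [_ [_ [_ [_ ]]]]]]]]]]]]]. Qed.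

Lemma mm (x : A) : x ⊓ x = x.
Proof. by rewrite -{2}(ab2 x x) ab1. Qed.
Lemma jj (x : A) : x ⊔ x = x.
Proof. by rewrite -{2}(ab1 x x) ab2. Qed.
Lemma dis' (x y z : A) : (y ⊔ z) ⊓ x = y ⊓ x ⊔ z ⊓ x.
Proof. by rewrite mC dis (mC x) (mC x). Qed.
Lemma jdis (x y z : A) : x ⊔ y ⊓ z = (x ⊔ y) ⊓ (x ⊔ z).
Proof.
by rewrite dis (mC _ x) ab1 dis' jA ab2.
Qed.
Lemma m0 (x : A) : x ⊓ ⊥ = ⊥.
Proof. by rewrite -(mcomp x) mA mm. Qed.
Lemma j1 (x : A) : x ⊔ ⊤ = ⊤.
Proof. by rewrite -(jcomp x) jA jj. Qed.
Lemma m0l (x : A) : ⊥ ⊓ x = ⊥. Proof. by rewrite mC m0. Qed.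
Lemma j1l (x : A) : ⊤ ⊔ x = ⊤. Proof. by rewrite jC j1. Qed.
Lemma m1l (x : A) : ⊤ ⊓ x = x. Proof. by rewrite mC m1. Qed.
Lemma j0l (x : A) : ⊥ ⊔ x = x. Proof. by rewrite jC j0. Qed.

Lemma compl_uniq (x y : A) : x ⊓ y = ⊥ -> x ⊔ y = ⊤ -> y = - x.
Proof.
move=> H1 H2.
rewrite -(m1 y) -(jcomp x) dis (mC y x) H1 j0l.
by rewrite -{2}(m1 (-x)) -H2 dis (mC (-x) x) mcomp j0l mC.
Qed.
Lemma cc (x : A) : - - x = x.
Proof. by symmetry; apply: compl_uniq; [rewrite mC mcomp | rewrite jC jcomp]. Qed.
Lemma c1 : - ⊤ = ⊥.
Proof. by symmetry; apply: compl_uniq; [rewrite m0 | rewrite j0]. Qed.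
Lemma c0 : - ⊥ = ⊤.
Proof. by symmetry; apply: compl_uniq; [rewrite m1 | rewrite j0l]. Qed.
Lemma dm_m (x y : A) : - (x ⊓ y) = - x ⊔ - y.
Proof.
symmetry; apply: compl_uniq.
  by rewrite dis (mC x y) -mA mcomp m0 j0l (mC y x) -mA mcomp m0.
by rewrite jC jdis (jC (-x ⊔ -y) x) jA jcomp j1l m1l -jA (jC (-y) y) jcomp j1.
Qed.
Lemma dm_j (x y : A) : - (x ⊔ y) = - x ⊓ - y.
Proof. by rewrite -{1}(cc x) -{1}(cc y) -dm_m cc. Qed.

Lemma leE (x y : A) : x ≤ y <-> x ⊔ y = y.
Proof.
rewrite /ile; split=> H.
  by rewrite -H jC mC ab2.
by rewrite -H ab1.
Qed.
Lemma le_refl (x : A) : x ≤ x. Proof. exact: mm. Qed.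
Lemma le_trans (x y z : A) : x ≤ y -> y ≤ z -> x ≤ z.
Proof. rewrite /ile => H1 H2. by rewrite -H1 -mA H2. Qed.
Lemma le_anti (x y : A) : x ≤ y -> y ≤ x -> x = y.
Proof. rewrite /ile => H1 H2. by rewrite -H1 -{2}H2 mC. Qed.
Lemma le_ml (x y : A) : x ⊓ y ≤ x.
Proof. by rewrite /ile -mA (mC y) mA mm. Qed.
Lemma le_mr (x y : A) : x ⊓ y ≤ y.
Proof. by rewrite /ile -mA mm. Qed.
Lemma le_jl (x y : A) : x ≤ x ⊔ y.
Proof. exact: ab1. Qed.
Lemma le_jr (x y : A) : y ≤ x ⊔ y.
Proof. by rewrite jC; exact: ab1. Qed.
Lemma le_meet (x y z : A) : z ≤ x ⊓ y <-> z ≤ x /\ z ≤ y.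
Proof.
split.
  by move=> H; split; [apply: le_trans H (le_ml _ _) | apply: le_trans H (le_mr _ _)].
by rewrite /ile; case=> H1 H2; rewrite mA H1 H2.
Qed.
Lemma le_join (x y z : A) : x ⊔ y ≤ z <-> x ≤ z /\ y ≤ z.
Proof.
split.
  by move=> H; split; [apply: le_trans (le_jl _ _) H | apply: le_trans (le_jr _ _) H].
by rewrite !leE; case=> H1 H2; rewrite -jA H2 H1.
Qed.
Lemma le1 (x : A) : x ≤ ⊤. Proof. exact: m1. Qed.
Lemma le0 (x : A) : ⊥ ≤ x. Proof. exact: m0l. Qed.
Lemma le_mono_m (x y z : A) : x ≤ y -> z ⊓ x ≤ z ⊓ y.
Proof.
move=> H; apply/le_meet; split; first exact: le_ml.
exact: le_trans (le_mr _ _) H.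
Qed.
Lemma shunt (z a y : A) : z ⊓ - a ≤ y <-> z ≤ y ⊔ a.
Proof.
split=> H.
  rewrite -(m1 z) -(jcomp a) dis.
  apply/le_join; split.
    exact: le_trans (le_mr _ _) (le_jr _ _).
  exact: le_trans H (le_jl _ _).
apply: (@le_trans _ ((y ⊔ a) ⊓ - a)).
  by rewrite (mC z) (mC (y ⊔ a)); apply: le_mono_m.
rewrite dis' mcomp j0; exact: le_ml.
Qed.
Lemma shunt2 (a z b : A) : a ⊓ z ≤ b <-> z ≤ - a ⊔ b.
Proof. by rewrite -{1}(cc a) mC shunt jC. Qed.

Lemma g_mono (x y : A) : x ≤ y -> iint x ≤ iint y.
Proof. rewrite /ile => H. by rewrite -gm H. Qed.
Lemma g0 : iint ⊥ = ⊥.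
Proof. apply: le_anti; [exact: gle | exact: le0]. Qed.
Lemma g_join_open (x y : A) : iint x = x -> iint y = y -> iint (x ⊔ y) = x ⊔ y.
Proof.
move=> Hx Hy; apply: le_anti; first exact: gle.
apply/le_join; split.
  by rewrite -{1}Hx; apply: g_mono; apply: le_jl.
by rewrite -{1}Hy; apply: g_mono; apply: le_jr.
Qed.
Lemma g_meet_open (x y : A) : iint x = x -> iint y = y -> iint (x ⊓ y) = x ⊓ y.
Proof. by move=> Hx Hy; rewrite gm Hx Hy. Qed.

Lemma ibigmeet_cat (s t : seq A) : ibigmeet (s ++ t) = ibigmeet s ⊓ ibigmeet t.
Proof. elim: s => [|x s IH] /=; first by rewrite m1l. by rewrite IH mA. Qed.
Lemma g_bigmeet (s : seq A) : iint (ibigmeet s) = ibigmeet (map (@iint A) s).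
Proof. elim: s => [|x s IH] /=; first exact: g1. by rewrite gm IH. Qed.
Lemma le_bigmeet (z : A) (s : seq A) : z ≤ ibigmeet s <-> (forall x, List.In x s -> z ≤ x).
Proof.
elim: s => [|x s IH] /=; first by split=> // _; apply: le1.
rewrite le_meet IH; split.
  by case=> H1 H2 y [<- //|]; exact: H2.
move=> H; split; first by apply: H; left.
by move=> y Hy; apply: H; right.
Qed.
End BoolAlg.


Definition ord1' : 'I_2 := @Ordinal 2 1 isT.

Lemma args2_eta T (f : 'I_2 -> T) : f = args2 (f ord0) (f ord1').
Proof.
apply: functional_extensionality => -[[|[|k]] Hk] //=; congr f; exact: val_inj.
Qed.
Lemma args1_eta T (f : 'I_1 -> T) : f = args1 (f ord0).
Proof.
apply: functional_extensionality => -[[|k] Hk] //=; congr f; exact: val_inj.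
Qed.
Lemma args0_eta T (f : 'I_0 -> T) : f = @args0 T.
Proof. by apply: functional_extensionality => -[k Hk]. Qed.
Lemma map_args2 T U (g : T -> U) x y : (fun i => g (args2 x y i)) = args2 (g x) (g y).
Proof. apply: functional_extensionality => i; rewrite /args2; by case: ifP. Qed.
Lemma map_args0 T U (g : T -> U) : (fun i => g (@args0 T i)) = @args0 U.
Proof. by apply: functional_extensionality => -[k Hk]. Qed.

Section Homs.
Variables (A B : algebra isig) (f : A -> B).
Hypothesis Hf : is_hom f.
Lemma hom_meet x y : f (imeet x y) = imeet (f x) (f y).
Proof. by rewrite /imeet Hf map_args2. Qed.
Lemma hom_join x y : f (ijoin x y) = ijoin (f x) (f y).
Proof. by rewrite /ijoin Hf map_args2. Qed.
Lemma hom_compl x : f (icompl x) = icompl (f x).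
Proof. by rewrite /icompl Hf. Qed.
Lemma hom_int x : f (iint x) = iint (f x).
Proof. by rewrite /iint Hf. Qed.
Lemma hom_bot : f (ibot A) = ibot B.
Proof. by rewrite /ibot Hf map_args0. Qed.
Lemma hom_top : f (itop A) = itop B.
Proof. by rewrite /itop Hf map_args0. Qed.
End Homs.

Lemma is_hom_i (A B : algebra isig) (f : A -> B) :
  (forall x y, f (imeet x y) = imeet (f x) (f y)) ->
  (forall x y, f (ijoin x y) = ijoin (f x) (f y)) ->
  (forall x, f (icompl x) = icompl (f x)) ->
  (forall x, f (iint x) = iint (f x)) ->
  f (ibot A) = ibot B -> f (itop A) = itop B -> is_hom f.
Proof.
move=> H1 H2 H3 H4 H5 H6 o; case: o => args /=.
- by rewrite (args2_eta args) map_args2; apply: H1.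
- by rewrite (args2_eta args) map_args2; apply: H2.
- by rewrite (args1_eta args); apply: H3.
- by rewrite (args0_eta args) map_args0; apply: H5.
- by rewrite (args0_eta args) map_args0; apply: H6.
- by rewrite (args1_eta args); apply: H4.
Qed.

Section HHoms.
Variables (A B : algebra hsig) (f : A -> B).
Hypothesis Hf : is_hom f.
Lemma hhom_meet x y : f (hmeet x y) = hmeet (f x) (f y).
Proof. by rewrite /hmeet Hf map_args2. Qed.
Lemma hhom_join x y : f (hjoin x y) = hjoin (f x) (f y).
Proof. by rewrite /hjoin Hf map_args2. Qed.
Lemma hhom_imp x y : f (himp x y) = himp (f x) (f y).
Proof. by rewrite /himp Hf map_args2. Qed.
Lemma hhom_bot : f (hbot A) = hbot B.
Proof. by rewrite /hbot Hf map_args0. Qed.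
Lemma hhom_top : f (htop A) = htop B.
Proof. by rewrite /htop Hf map_args0. Qed.
End HHoms.

Lemma is_hom_h (A B : algebra hsig) (f : A -> B) :
  (forall x y, f (hmeet x y) = hmeet (f x) (f y)) ->
  (forall x y, f (hjoin x y) = hjoin (f x) (f y)) ->
  (forall x y, f (himp x y) = himp (f x) (f y)) ->
  f (hbot A) = hbot B -> f (htop A) = htop B -> is_hom f.
Proof.
move=> H1 H2 H3 H5 H6 o; case: o => args /=.
- by rewrite (args2_eta args) map_args2; apply: H1.
- by rewrite (args2_eta args) map_args2; apply: H2.
- by rewrite (args2_eta args) map_args2; apply: H3.
- by rewrite (args0_eta args) map_args0; apply: H5.
- by rewrite (args0_eta args) map_args0; apply: H6.
Qed.


Definition lhom (L : algebra hsig) (A : algebra isig) (f : L -> A) :=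
  (forall x y, f (hmeet x y) = imeet (f x) (f y)) /\
  (forall x y, f (hjoin x y) = ijoin (f x) (f y)) /\
  f (hbot L) = ibot A /\ f (htop L) = itop A.

Definition cnf (A : algebra isig) (l : seq (A * A)) : A :=
  ibigmeet [seq ijoin (icompl p.1) p.2 | p <- l].
Definition mp (L A : Type) (f : L -> A) (s : seq (L * L)) : seq (A * A) :=
  [seq (f p.1, f p.2) | p <- s].
Definition prodL (L : algebra hsig) (s t : seq (L * L)) : seq (L * L) :=
  [seq (hmeet p.1 q.1, hjoin p.2 q.2) | p <- s, q <- t].

Fixpoint PrA (A : algebra isig) (x y : A) (l : seq (A * A)) : Prop :=
  match l with
  | [::] => ile x y
  | p :: l' => PrA x (ijoin y p.1) l' /\ PrA (imeet x p.2) y l'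
  end.
Fixpoint PrL (L : algebra hsig) (x y : L) (l : seq (L * L)) : Prop :=
  match l with
  | [::] => hle x y
  | p :: l' => PrL x (hjoin y p.1) l' /\ PrL (hmeet x p.2) y l'
  end.

Lemma cnf_mp (L : Type) (A : algebra isig) (f : L -> A) s :
  cnf (mp f s) = ibigmeet [seq ijoin (icompl (f p.1)) (f p.2) | p <- s].
Proof. by rewrite /cnf /mp -map_comp. Qed.

Section CNF.
Variable A : algebra isig.
Hypothesis HA : is_IA A.

Lemma cnf_cat (l1 l2 : seq (A * A)) : cnf (l1 ++ l2) = imeet (cnf l1) (cnf l2).
Proof. by rewrite /cnf map_cat ibigmeet_cat. Qed.

Lemma jAC4 (w x y z : A) : ijoin (ijoin w x) (ijoin y z) = ijoin (ijoin w y) (ijoin x z).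
Proof. by rewrite -!(jA HA) (jA HA x y z) (jC HA x y) -(jA HA). Qed.

Lemma mAC (x y z : A) : imeet x (imeet y z) = imeet (imeet x z) y.
Proof. by rewrite (mC HA y z) (mA HA). Qed.

Variable L : algebra hsig.
Variable psi : L -> A.
Hypothesis Hpsi : lhom psi.

Lemma cnf_single_prod (p : L * L) (t : seq (L * L)) :
  cnf (mp psi [seq (hmeet p.1 q.1, hjoin p.2 q.2) | q <- t])
  = ijoin (ijoin (icompl (psi p.1)) (psi p.2)) (cnf (mp psi t)).
Proof.
case: Hpsi => Hm [Hj _].
elim: t => [|q t IH] /=; first by rewrite (j1 HA).
rewrite /cnf /= in IH *; rewrite IH Hm Hj (dm_m HA) jAC4.
by rewrite -(jdis HA).
Qed.

Lemma cnf_prod (s t : seq (L * L)) :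
  cnf (mp psi (prodL s t)) = ijoin (cnf (mp psi s)) (cnf (mp psi t)).
Proof.
elim: s => [|p s IH] /=.
  by rewrite /prodL /= /cnf /= (j1l HA).
rewrite /prodL /= /mp map_cat -/(mp psi _) cnf_cat.
rewrite cnf_single_prod -/(prodL s t) IH.
rewrite /cnf /= -/(cnf (mp psi s)) -/(cnf (mp psi t)).
by rewrite (jC HA (imeet _ _)) (jdis HA) !(jC HA (cnf (mp psi t))).
Qed.

Lemma PrA_iff (x y : A) (l : seq (A * A)) :
  ile (imeet x (cnf l)) y <-> PrA x y l.
Proof.
elim: l x y => [|p l IH] x y /=.
  by rewrite /cnf /= (m1 HA).
rewrite /cnf /= -/(cnf l) mAC (dis HA) (le_join HA) (shunt HA) -IH.
rewrite -IH -(mA HA) (mC HA (cnf l)) (mA HA).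
by rewrite -(mA HA) (mC HA p.2) (mA HA).
Qed.

Lemma PrL_PrA (x y : L) (s : seq (L * L)) :
  PrL x y s -> PrA (psi x) (psi y) (mp psi s).
Proof.
case: Hpsi => Hm [Hj _].
elim: s x y => [|p s IH] x y /=.
  by rewrite /hle /ile => H; rewrite -Hm H.
case=> H1 H2; split.
  by rewrite -Hj; apply: IH.
by rewrite -Hm; apply: IH.
Qed.

Hypothesis Hinj : injective psi.
Lemma PrA_PrL (x y : L) (s : seq (L * L)) :
  PrA (psi x) (psi y) (mp psi s) -> PrL x y s.
Proof.
case: Hpsi => Hm [Hj _].
elim: s x y => [|p s IH] x y /=.
  by rewrite /hle /ile => H; apply: Hinj; rewrite Hm H.
case=> H1 H2; split.
  by apply: IH; rewrite Hj.
by apply: IH; rewrite Hm.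
Qed.
End CNF.

Lemma in_map2 (T U : Type) (f : T -> U) (s : seq T) y :
  List.In y [seq f x | x <- s] -> exists x, List.In x s /\ y = f x.
Proof.
elim: s => [|x s IH] //= [<-|H]; first by exists x; split=> //; left.
by case: (IH H) => z [Hz ->]; exists z; split=> //; right.
Qed.
Lemma in_map1 (T U : Type) (f : T -> U) (s : seq T) x :
  List.In x s -> List.In (f x) [seq f x | x <- s].
Proof.
elim: s => [|z s IH] //= [->|H]; [by left | by right; apply: IH].
Qed.

Lemma cnf_transfer (L : algebra hsig) (A1 A2 : algebra isig)
  (HA1 : is_IA A1) (HA2 : is_IA A2) (p1 : L -> A1) (p2 : L -> A2) :
  lhom p1 -> injective p1 -> lhom p2 ->
  forall s t, ile (cnf (mp p1 s)) (cnf (mp p1 t)) ->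
              ile (cnf (mp p2 s)) (cnf (mp p2 t)).
Proof.
move=> H1 Hi H2 s t.
rewrite /cnf (le_bigmeet HA1) (le_bigmeet HA2) => H c Hc.
case: (in_map2 Hc) => q [Hq ->]; case: (in_map2 Hq) => r [Hr ->] /=.
have := H _ (in_map1 _ (in_map1 _ Hr)) => /=.
rewrite -(shunt2 HA1) -(shunt2 HA2) -/(cnf _) -/(cnf _) (PrA_iff HA1) (PrA_iff HA2) => HH.
by apply: (PrL_PrA H2); apply: (PrA_PrL H1 Hi).
Qed.


Lemma is_hom_comp (S : signature) (A B C : algebra S) (f : B -> C) (g : A -> B) :
  is_hom f -> is_hom g -> is_hom (fun x => f (g x)).
Proof. by move=> Hf Hg o args; rewrite Hg Hf. Qed.

Section HAfacts.
Variable L : algebra hsig.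
Hypothesis HL : is_HA L.
Lemma hmC (x y : L) : hmeet x y = hmeet y x. Proof. by case: HL. Qed.
Lemma hab1 (x y : L) : hmeet x (hjoin x y) = x. Proof. by case: HL => _ [_ [_ [_ []]]]. Qed.
Lemma hab2 (x y : L) : hjoin x (hmeet x y) = x. Proof. by case: HL => _ [_ [_ [_ [_ []]]]]. Qed.
Lemma hm1 (x : L) : hmeet x (htop L) = x. Proof. by case: HL => _ [_ [_ [_ [_ [_ []]]]]]. Qed.
Lemma hres (a x y : L) : hle (hmeet a x) y <-> hle a (himp x y).
Proof. by case: HL => _ [_ [_ [_ [_ [_ [_ [_ H]]]]]]]. Qed.
Lemma hmm (x : L) : hmeet x x = x. Proof. by rewrite -{2}(hab2 x x) hab1. Qed.
Lemma himp_top (x : L) : himp (htop L) x = x.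
Proof.
have H1 : hle (himp (htop L) x) x.
  have := proj2 (hres (himp (htop L) x) (htop L) x); rewrite hm1; apply.
  by rewrite /hle hmm.
have H2 : hle x (himp (htop L) x).
  by apply: (proj1 (hres x (htop L) x)); rewrite /hle hm1 hmm.
by rewrite /hle in H1 H2; rewrite -{1}H1 hmC H2.
Qed.
End HAfacts.

Lemma lhom_bigmeet (L : algebra hsig) (A : algebra isig) (f : L -> A) (s : seq L) :
  lhom f -> f (hbigmeet s) = ibigmeet (map f s).
Proof.
case=> Hm [_ [_ Ht]]; elim: s => [|x s IH] //=.
by rewrite /hbigmeet /= Hm -IH.
Qed.

Section BOf.
Variables (L : algebra hsig) (B : algebra isig) (e : L -> B).
Hypothesis Hb : is_B_of e.
Lemma Bo_HL : is_HA L. Proof. by case: Hb. Qed.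
Lemma Bo_HB : is_IA B. Proof. by case: Hb => _ []. Qed.
Lemma Bo_inj : injective e. Proof. by case: Hb => _ [_ []]. Qed.
Lemma Bo_lhom : lhom e.
Proof. by case: Hb => _ [_ [_ [H1 [H2 [H3 [H4 _]]]]]]. Qed.
Lemma Bo_gen x : bgen e x.
Proof. by case: Hb => _ [_ [_ [H1 [H2 [H3 [H4 [H5 _]]]]]]]. Qed.
Lemma Bo_form (s : seq (L * L)) :
  iint (ibigmeet [seq ijoin (icompl (e p.1)) (e p.2) | p <- s])
  = e (hbigmeet [seq himp p.1 p.2 | p <- s]).
Proof. by case: Hb => _ [_ [_ [H1 [H2 [H3 [H4 [H5 H6]]]]]]]. Qed.

Lemma e_meet x y : e (hmeet x y) = imeet (e x) (e y). Proof. by case: Bo_lhom. Qed.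
Lemma e_join x y : e (hjoin x y) = ijoin (e x) (e y). Proof. by case: Bo_lhom => _ []. Qed.
Lemma e_bot : e (hbot L) = ibot B. Proof. by case: Bo_lhom => _ [_ []]. Qed.
Lemma e_top : e (htop L) = itop B. Proof. by case: Bo_lhom => _ [_ []]. Qed.

Lemma e_imp u v : iint (ijoin (icompl (e u)) (e v)) = e (himp u v).
Proof.
have := Bo_form [:: (u, v)]; rewrite /= (m1 Bo_HB) /hbigmeet /=.
by rewrite (hm1 Bo_HL).
Qed.
Lemma e_open x : iint (e x) = e x.
Proof.
by rewrite -{2}(himp_top Bo_HL x) -e_imp e_top (c1 Bo_HB) (j0l Bo_HB).
Qed.

Lemma cnf_e_single a : cnf (mp e [:: (htop L, a)]) = e a.
Proof. by rewrite /cnf /= e_top (c1 Bo_HB) (j0l Bo_HB) (m1 Bo_HB). Qed.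

Lemma cnf_compl s : exists t, icompl (cnf (mp e s)) = cnf (mp e t).
Proof.
have HB := Bo_HB.
elim: s => [|p s [t IH]].
  exists [:: (htop L, hbot L)].
  by rewrite /cnf /= e_top e_bot (c1 HB) (j0 HB) (m1 HB).
exists (prodL [:: (htop L, p.1); (p.2, hbot L)] t).
rewrite (cnf_prod HB Bo_lhom) -IH /cnf /= -/(cnf (mp e s)).
rewrite (dm_m HB) e_top e_bot (c1 HB) (j0l HB) (j0 HB) (m1 HB).
by rewrite (dm_j HB) (cc HB).
Qed.

Lemma cnf_rep x : exists s, x = cnf (mp e s).
Proof.
have HB := Bo_HB.
elim: (Bo_gen x) => {x}.
- by move=> a; exists [:: (htop L, a)]; rewrite cnf_e_single.
- exists [:: (htop L, hbot L)].
  by rewrite /cnf /= e_top e_bot (c1 HB) (j0 HB) (m1 HB).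
- by exists [::].
- move=> x y _ [s ->] _ [t ->]; exists (s ++ t).
  by rewrite /mp map_cat (cnf_cat HB).
- move=> x y _ [s ->] _ [t ->]; exists (prodL s t).
  by rewrite (cnf_prod HB Bo_lhom).
- by move=> x _ [s ->]; apply: cnf_compl.
Qed.

Lemma hom_agree (C : algebra isig) (F1 F2 : B -> C) :
  is_hom F1 -> is_hom F2 -> (forall a, F1 (e a) = F2 (e a)) -> forall x, F1 x = F2 x.
Proof.
move=> H1 H2 He x; elim: (Bo_gen x) => {x}.
- exact: He.
- by rewrite (hom_bot H1) (hom_bot H2).
- by rewrite (hom_top H1) (hom_top H2).
- by move=> x y _ Hx _ Hy; rewrite (hom_meet H1) (hom_meet H2) Hx Hy.
- by move=> x y _ Hx _ Hy; rewrite (hom_join H1) (hom_join H2) Hx Hy.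
- by move=> x _ Hx; rewrite (hom_compl H1) (hom_compl H2) Hx.
Qed.

Section Ext.
Variables (C : algebra isig) (phi : L -> C).
Hypothesis HC : is_IA C.
Hypothesis Hphi : lhom phi.
Hypothesis Himp : forall u v, phi (himp u v) = iint (ijoin (icompl (phi u)) (phi v)).

Definition rep (x : B) : seq (L * L) :=
  proj1_sig (constructive_indefinite_description _ (cnf_rep x)).
Lemma repP x : x = cnf (mp e (rep x)).
Proof. exact: proj2_sig (constructive_indefinite_description _ (cnf_rep x)). Qed.
Definition Phi (x : B) : C := cnf (mp phi (rep x)).

Lemma PhiE s : Phi (cnf (mp e s)) = cnf (mp phi s).
Proof.
rewrite /Phi; set x := cnf (mp e s).
have Hx := repP x.
apply: (le_anti HC).
  apply: (cnf_transfer Bo_HB HC Bo_lhom Bo_inj Hphi).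
  rewrite -Hx; exact: (le_refl Bo_HB).
apply: (cnf_transfer Bo_HB HC Bo_lhom Bo_inj Hphi).
rewrite -Hx; exact: (le_refl Bo_HB).
Qed.

Lemma Phi_e a : Phi (e a) = phi a.
Proof.
case: Hphi => _ [_ [_ Ht]].
by rewrite -cnf_e_single PhiE /cnf /= Ht (c1 HC) (j0l HC) (m1 HC).
Qed.

Lemma Phi_meet x y : Phi (imeet x y) = imeet (Phi x) (Phi y).
Proof.
case: (cnf_rep x) => s ->; case: (cnf_rep y) => t ->.
by rewrite -(cnf_cat Bo_HB) /mp -map_cat -/(mp e _) !PhiE /mp map_cat (cnf_cat HC).
Qed.
Lemma Phi_join x y : Phi (ijoin x y) = ijoin (Phi x) (Phi y).
Proof.
case: (cnf_rep x) => s ->; case: (cnf_rep y) => t ->.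
by rewrite -(cnf_prod Bo_HB Bo_lhom) !PhiE (cnf_prod HC Hphi).
Qed.
Lemma Phi_top : Phi (itop B) = itop C.
Proof. by have := PhiE [::]; rewrite /cnf /=. Qed.
Lemma Phi_bot : Phi (ibot B) = ibot C.
Proof.
case: Hphi => _ [_ [Hb0 Ht]].
have := PhiE [:: (htop L, hbot L)].
rewrite /cnf /= e_top e_bot Hb0 Ht (c1 Bo_HB) (c1 HC) (j0 Bo_HB) (j0 HC).
by rewrite (m1 Bo_HB) (m1 HC).
Qed.
Lemma Phi_compl x : Phi (icompl x) = icompl (Phi x).
Proof.
apply: (compl_uniq HC).
  by rewrite -Phi_meet (mcomp Bo_HB) Phi_bot.
by rewrite -Phi_join (jcomp Bo_HB) Phi_top.
Qed.
Lemma Phi_int x : Phi (iint x) = iint (Phi x).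
Proof.
case: (cnf_rep x) => s ->.
rewrite PhiE cnf_mp Bo_form Phi_e (lhom_bigmeet _ Hphi) -map_comp.
rewrite cnf_mp (g_bigmeet HC) -map_comp.
by congr ibigmeet; apply: eq_map => p /=; rewrite Himp.
Qed.
Lemma Phi_hom : is_hom Phi.
Proof.
apply: is_hom_i.
- exact: Phi_meet.
- exact: Phi_join.
- exact: Phi_compl.
- exact: Phi_int.
- exact: Phi_bot.
- exact: Phi_top.
Qed.
End Ext.
End BOf.


Definition rawop (A : algebra isig) (o : hop) : ('I_(harity o) -> A) -> A :=
  match o return ('I_(harity o) -> A) -> A with
  | HMeet => fun a => imeet (a ord0) (a ord1')
  | HJoin => fun a => ijoin (a ord0) (a ord1')
  | HImp => fun a => ijoin (icompl (a ord0)) (a ord1')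
  | HBot => fun _ => ibot A
  | HTop => fun _ => itop A
  end.

Section Rho.
Variable A : algebra isig.
Hypothesis HA : is_IA A.
Definition rcar := {x : A | iint x = x}.
Definition rinterp (o : op hsig) (a : 'I_(arity o) -> rcar) : rcar :=
  exist _ (iint (rawop (fun i => sval (a i)))) (gg HA _).
Definition rho : algebra hsig := @Algebra hsig rcar rinterp.

Lemma rval_inj (x y : rho) : sval x = sval y -> x = y.
Proof.
case: x => x Hx; case: y => y Hy /= E; subst y.
by rewrite (proof_irrelevance _ Hx Hy).
Qed.
Lemma ropen (x : rho) : iint (sval x) = sval x.
Proof. exact: proj2_sig x. Qed.
Lemma rv_meet (x y : rho) : sval (hmeet x y) = imeet (sval x) (sval y).
Proof. by rewrite /= (g_meet_open HA (ropen x) (ropen y)). Qed.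
Lemma rv_join (x y : rho) : sval (hjoin x y) = ijoin (sval x) (sval y).
Proof. by rewrite /= (g_join_open HA (ropen x) (ropen y)). Qed.
Lemma rv_imp (x y : rho) : sval (himp x y) = iint (ijoin (icompl (sval x)) (sval y)).
Proof. by []. Qed.
Lemma rv_bot : sval (hbot rho) = ibot A.
Proof. by rewrite /= (g0 HA). Qed.
Lemma rv_top : sval (htop rho) = itop A.
Proof. by rewrite /= (g1 HA). Qed.
Lemma rle (x y : rho) : hle x y <-> ile (sval x) (sval y).
Proof.
rewrite /hle /ile; split.
  by move=> H; rewrite -rv_meet H.
by move=> H; apply: rval_inj; rewrite rv_meet.
Qed.

Lemma rho_HA : is_HA rho.
Proof.
split; [|split; [|split; [|split; [|split; [|split; [|split; [|split]]]]]]].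
- by move=> x y; apply: rval_inj; rewrite !rv_meet (mC HA).
- by move=> x y z; apply: rval_inj; rewrite !rv_meet (mA HA).
- by move=> x y; apply: rval_inj; rewrite !rv_join (jC HA).
- by move=> x y z; apply: rval_inj; rewrite !rv_join (jA HA).
- by move=> x y; apply: rval_inj; rewrite rv_meet rv_join (ab1 HA).
- by move=> x y; apply: rval_inj; rewrite rv_join rv_meet (ab2 HA).
- by move=> x; apply: rval_inj; rewrite rv_meet rv_top (m1 HA).
- by move=> x; apply: rval_inj; rewrite rv_join rv_bot (j0 HA).
- move=> a x y; rewrite !rle rv_meet rv_imp; split.
    rewrite (mC HA) (shunt2 HA) => H.
    by rewrite -(ropen a); apply: (g_mono HA).
  move=> H; rewrite (mC HA) (shunt2 HA).
  exact: (le_trans HA) H (gle HA _).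
Qed.
End Rho.

Definition trop (o : hop) : ('I_(harity o) -> term isig) -> term isig :=
  match o return ('I_(harity o) -> term isig) -> term isig with
  | HMeet => fun a => @App isig IMeet (args2 (a ord0) (a ord1'))
  | HJoin => fun a => @App isig IJoin (args2 (a ord0) (a ord1'))
  | HImp => fun a => @App isig IJoin (args2 (@App isig ICompl (args1 (a ord0))) (a ord1'))
  | HBot => fun _ => @App isig IBot (@args0 _)
  | HTop => fun _ => @App isig ITop (@args0 _)
  end.

Fixpoint tr (t : term hsig) : term isig :=
  match t with
  | Var k => @App isig IInt (args1 (Var k))
  | App o f => @App isig IInt (args1 (trop (fun i => tr (f i))))
  end.

Lemma eval_tr (X : algebra hsig) (A : algebra isig) (m : X -> A)
  (Hm : forall x y, m (hmeet x y) = iint (imeet (m x) (m y)))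
  (Hj : forall x y, m (hjoin x y) = iint (ijoin (m x) (m y)))
  (Hi : forall x y, m (himp x y) = iint (ijoin (icompl (m x)) (m y)))
  (Hb : m (hbot X) = iint (ibot A)) (Ht : m (htop X) = iint (itop A))
  (w : nat -> A) (v : nat -> X) (Hwv : forall k, iint (w k) = m (v k)) :
  forall t, eval w (tr t) = m (eval v t).
Proof.
elim=> [k|o f IH] /=; first exact: Hwv.
case: o f IH => f IH /=.
- rewrite map_args2 /= !IH (args2_eta (fun i => eval v (f i))).
  by rewrite Hm.
- rewrite map_args2 /= !IH (args2_eta (fun i => eval v (f i))).
  by rewrite Hj.
- rewrite map_args2 /args1 /= !IH (args2_eta (fun i => eval v (f i))).
  by rewrite Hi.
- rewrite map_args0 (args0_eta (fun i => eval v (f i))).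
  by rewrite Hb.
- rewrite map_args0 (args0_eta (fun i => eval v (f i))).
  by rewrite Ht.
Qed.

Lemma eval_ext_lt (S : signature) (A : algebra S) (n : nat) (v w : nat -> A) :
  (forall k, k < n -> v k = w k) -> forall t, vars_lt n t -> eval v t = eval w t.
Proof.
move=> H; elim=> [k|o f IH] /=; first exact: H.
move=> Hf; congr (interp A o); apply: functional_extensionality => i.
exact: IH.
Qed.

Lemma tr_vars n t : vars_lt n t -> vars_lt n (tr t).
Proof.
elim: t => [k|o f IH] /=; first by move=> H i.
move=> Hf i /=; case: o f IH Hf => f IH Hf /=; rewrite /args2 => j.
- by case: ifP => _; apply: IH; apply: Hf.
- by case: ifP => _; apply: IH; apply: Hf.
- by case: ifP => _ //= => [k|]; apply: IH; apply: Hf.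
- by case: j.
- by case: j.
Qed.


Section Main.
Variable E : term hsig * term hsig -> Prop.

Lemma open_range (L : algebra hsig) (B : algebra isig) (e : L -> B) (Hb : is_B_of e) x :
  exists l, iint x = e l.
Proof.
case: (cnf_rep Hb x) => s ->; rewrite cnf_mp (Bo_form Hb).
by eexists.
Qed.

Lemma eval_tr_e (L : algebra hsig) (B : algebra isig) (e : L -> B) (Hb : is_B_of e)
  (w : nat -> B) (v : nat -> L) (Hwv : forall k, iint (w k) = e (v k)) t :
  eval w (tr t) = e (eval v t).
Proof.
have HB := Bo_HB Hb.
apply: eval_tr => //.
- by move=> x y; rewrite -(e_meet Hb) (e_open Hb).
- by move=> x y; rewrite -(e_join Hb) (e_open Hb).
- by move=> x y; rewrite (e_imp Hb).
- by rewrite (e_bot Hb) (g0 HB).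
- by rewrite (e_top Hb) (g1 HB).
Qed.

Lemma eval_tr_rho (A : algebra isig) (HA : is_IA A) (w : nat -> A) (v : nat -> rho HA)
  (Hwv : forall k, iint (w k) = sval (v k)) t :
  eval w (tr t) = sval (eval v t).
Proof. by apply: eval_tr. Qed.

Lemma B_in_rho (L : algebra hsig) (B : algebra isig) (e : L -> B) :
  HA_variety E L -> is_B_of e -> rho_star (HA_variety E) B.
Proof.
move=> HL Hb; split; first exact: Bo_HB Hb.
move=> eq H; exact: H L B e HL Hb.
Qed.

Lemma rho_in_V (A : algebra isig) (HA : is_IA A) :
  rho_star (HA_variety E) A -> HA_variety E (rho HA).
Proof.
case=> _ Hst; split; first exact: rho_HA.
move=> eq Heq v; apply: rval_inj.
have Hw : forall k, iint (sval (v k)) = sval (v k) by move=> k; rewrite ropen.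
rewrite -!(@eval_tr_rho A HA (fun k => sval (v k)) v Hw).
apply: (Hst (tr eq.1, tr eq.2)) => L' B' e' [_ HE] Hb' w /=.
pose v' k := proj1_sig (constructive_indefinite_description _ (open_range Hb' (w k))).
have Hv' : forall k, iint (w k) = e' (v' k).
  move=> k; exact: proj2_sig (constructive_indefinite_description _ (open_range Hb' (w k))).
by rewrite !(eval_tr_e Hb' Hv') (HE eq Heq v').
Qed.

Lemma In_iota i n : List.In i (iota 0 n) <-> i < n.
Proof.
have H : forall m, List.In i (iota m n) <-> m <= i < m + n.
  elim: n => [|n IH] m /=; first by split=> // H; lia.
  rewrite IH; split; first by case=> H; lia.
  move=> H; case: (eqVneq m i) => [->|Hne]; [by left | right; lia].
by rewrite H.
Qed.

Lemma fp_B (L : algebra hsig) (B : algebra isig) (e : L -> B) :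
  fin_presented (HA_variety E) L -> is_B_of e -> fin_presented (rho_star (HA_variety E)) B.
Proof.
case=> HV [n [a [R [Hvars [Hrel Huniv]]]]] Hb.
have HB := Bo_HB Hb.
split; first exact: B_in_rho HV Hb.
exists n, (fun k => e (a k)),
  ([seq (tr p.1, tr p.2) | p <- R] ++ [seq (Var i, @App isig IInt (args1 (Var i))) | i <- iota 0 n]).
split; [|split].
- move=> p /List.in_app_iff [] Hp; case: (in_map2 Hp) => q [Hq ->] /=.
    by case: (Hvars q Hq) => H1 H2; split; apply: tr_vars.
  by move/In_iota: Hq => Hq; split => //= i.
- move=> p /List.in_app_iff [] Hp; case: (in_map2 Hp) => q [Hq ->] /=.
    by rewrite !(@eval_tr_e L B e Hb _ a) ?Hrel // => k; apply: (e_open Hb).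
  by symmetry; apply: (e_open Hb).
move=> B0 HB0 b Hbrel.
have HI : is_IA B0 := proj1 HB0.
have Hbo : forall i, i < n -> iint (b i) = b i.
  move=> i Hi; symmetry.
  have := Hbrel (Var i, @App isig IInt (args1 (Var i))).
  apply; apply: List.in_or_app; right.
  by apply: (in_map1 (fun i => (Var i, @App isig IInt (args1 (Var i))))); apply/In_iota.
have HV0 : HA_variety E (rho HI) := rho_in_V HI HB0.
pose b' : nat -> rho HI := fun k => exist (fun x => iint x = x) (iint (b k)) (gg HI _).
have Hb'rel : forall p, List.In p R -> eval b' p.1 = eval b' p.2.
  move=> p Hp; apply: rval_inj.
  have Hw : forall k, iint (iint (b k)) = sval (b' k) by move=> k; rewrite /= (gg HI).
  rewrite -!(@eval_tr_rho B0 HI (fun k => iint (b k)) b' Hw).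
  case: (Hvars p Hp) => H1 H2.
  rewrite !(@eval_ext_lt _ _ n (fun k => iint (b k)) b) //; try exact: tr_vars.
  apply: (Hbrel (tr p.1, tr p.2)); apply: List.in_or_app; left.
  exact: (in_map1 (fun p => (tr p.1, tr p.2))).
case: (Huniv _ HV0 b' Hb'rel) => hL [HhL [HhLa HhLu]].
pose phi := fun x => sval (hL x).
have Hphi : lhom phi.
  split; [|split; [|split]].
  - by move=> x y; rewrite /phi (hhom_meet HhL) rv_meet.
  - by move=> x y; rewrite /phi (hhom_join HhL) rv_join.
  - by rewrite /phi (hhom_bot HhL) rv_bot.
  - by rewrite /phi (hhom_top HhL) rv_top.
have Himp : forall u v, phi (himp u v) = iint (ijoin (icompl (phi u)) (phi v)).
  by move=> u v; rewrite /phi (hhom_imp HhL) rv_imp.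
exists (Phi Hb phi); split; first exact: Phi_hom.
split.
  by move=> i Hi; rewrite (Phi_e Hb HI Hphi) /phi HhLa //= Hbo.
move=> h' Hh' Hh'a x.
have Hko : forall l, iint (h' (e l)) = h' (e l).
  by move=> l; rewrite -(hom_int Hh') (e_open Hb).
pose k : L -> rho HI := fun l => exist (fun x => iint x = x) (h' (e l)) (Hko l).
have Hk : is_hom k.
  apply: is_hom_h.
  - by move=> x1 y1; apply: rval_inj; rewrite rv_meet /= (e_meet Hb) (hom_meet Hh').
  - by move=> x1 y1; apply: rval_inj; rewrite rv_join /= (e_join Hb) (hom_join Hh').
  - move=> x1 y1; apply: rval_inj; rewrite rv_imp /= -(e_imp Hb).
    by rewrite (hom_int Hh') (hom_join Hh') (hom_compl Hh').
  - by apply: rval_inj; rewrite rv_bot /= (e_bot Hb) (hom_bot Hh').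
  - by apply: rval_inj; rewrite rv_top /= (e_top Hb) (hom_top Hh').
have Hka : forall i, i < n -> k (a i) = b' i.
  by move=> i Hi; apply: rval_inj; rewrite /= Hh'a // Hbo.
have Hag := HhLu k Hk Hka.
apply: (hom_agree Hb Hh' (Phi_hom Hb HI Hphi Himp)) => l.
by rewrite (Phi_e Hb HI Hphi) /phi -Hag.
Qed.

Lemma proj_B (M : algebra hsig) (BM : algebra isig) (eM : M -> BM) :
  projective (HA_variety E) M -> is_B_of eM -> projective (rho_star (HA_variety E)) BM.
Proof.
case=> HVM Hproj Hb.
split; first exact: B_in_rho HVM Hb.
move=> C D HCr HDr f g Hf Hsurj Hg.
have HC := proj1 HCr; have HD := proj1 HDr.
have Hrfo : forall x : rho HC, iint (f (sval x)) = f (sval x).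
  by move=> x; rewrite -(hom_int Hf) ropen.
pose rf : rho HC -> rho HD := fun x => exist (fun x => iint x = x) (f (sval x)) (Hrfo x).
have rfE : forall x, sval (rf x) = f (sval x) by [].
have Hrf : is_hom rf.
  apply: is_hom_h.
  - by move=> x y; apply: rval_inj; rewrite rv_meet !rfE rv_meet (hom_meet Hf).
  - by move=> x y; apply: rval_inj; rewrite rv_join !rfE rv_join (hom_join Hf).
  - move=> x y; apply: rval_inj; rewrite rv_imp !rfE rv_imp.
    by rewrite (hom_int Hf) (hom_join Hf) (hom_compl Hf).
  - by apply: rval_inj; rewrite rv_bot !rfE rv_bot (hom_bot Hf).
  - by apply: rval_inj; rewrite rv_top !rfE rv_top (hom_top Hf).
have Hrs : forall y : rho HD, exists x, rf x = y.
  move=> y; case: (Hsurj (sval y)) => x Hx.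
  exists (exist (fun x => iint x = x) (iint x) (gg HC x)); apply: rval_inj => /=.
  by rewrite (hom_int Hf) Hx ropen.
have Hgo : forall m, iint (g (eM m)) = g (eM m).
  by move=> m; rewrite -(hom_int Hg) (e_open Hb).
pose g' : M -> rho HD := fun m => exist (fun x => iint x = x) (g (eM m)) (Hgo m).
have Hg' : is_hom g'.
  apply: is_hom_h.
  - by move=> x1 y1; apply: rval_inj; rewrite rv_meet /= (e_meet Hb) (hom_meet Hg).
  - by move=> x1 y1; apply: rval_inj; rewrite rv_join /= (e_join Hb) (hom_join Hg).
  - move=> x1 y1; apply: rval_inj; rewrite rv_imp /= -(e_imp Hb).
    by rewrite (hom_int Hg) (hom_join Hg) (hom_compl Hg).
  - by apply: rval_inj; rewrite rv_bot /= (e_bot Hb) (hom_bot Hg).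
  - by apply: rval_inj; rewrite rv_top /= (e_top Hb) (hom_top Hg).
case: (Hproj _ _ (rho_in_V HC HCr) (rho_in_V HD HDr) rf g' Hrf Hrs Hg') => h [Hh Hfh].
pose phi := fun x => sval (h x).
have Hphi : lhom phi.
  split; [|split; [|split]].
  - by move=> x y; rewrite /phi (hhom_meet Hh) rv_meet.
  - by move=> x y; rewrite /phi (hhom_join Hh) rv_join.
  - by rewrite /phi (hhom_bot Hh) rv_bot.
  - by rewrite /phi (hhom_top Hh) rv_top.
have Himp : forall u v, phi (himp u v) = iint (ijoin (icompl (phi u)) (phi v)).
  by move=> u v; rewrite /phi (hhom_imp Hh) rv_imp.
exists (Phi Hb phi); split; first exact: Phi_hom.
apply: (hom_agree Hb (is_hom_comp Hf (Phi_hom Hb HC Hphi Himp)) Hg) => m /=.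
rewrite (Phi_e Hb HC Hphi) /phi.
by have := congr1 sval (Hfh m).
Qed.
End Main.

Unset Implicit Arguments.

Theorem theorem5p4 (E : term hsig * term hsig -> Prop)
    (L M : algebra hsig) (u : L -> M)
    (BL BM : algebra isig) (eL : L -> BL) (eM : M -> BM) (Bu : BL -> BM) :
  unifier (HA_variety E) u ->
  is_B_of eL -> is_B_of eM ->
  is_B_hom eL eM u Bu ->
  unifier (rho_star (HA_variety E)) Bu.
Proof.
move=> [HfpL [HfpM [HprojM Hu]]] HbL HbM [HBu _].
split; first exact: fp_B HfpL HbL.
split; first exact: fp_B HfpM HbM.
split; first exact: proj_B HprojM HbM.
exact: HBu.
Qed.
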